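(* Let $S$ be a $d\times d$ symmetric positive semidefinite matrix and $L,U$ symmetric $d\times d$ matrices with entries in $\mathbb{R}\cup\{-\infty,+\infty\}$ such that $L_{ij}\le0\le U_{ij}$ for $i\ne j$ and $L_{ii}=U_{ii}=0$. Consider the problem of minimizing $-\log\det K+\operatorname{tr}(SK)+\|K\|_{LU}$ over positive definite $K$. If the optimum exists, it is the unique positive definite matrix $\widehat K$, with $\widehat\Sigma=\widehat K^{-1}$, satisfying for all $i,j\in V=\{1,\dots,d\}$: $\widehat\Sigma_{ij}-S_{ij}\in\{L_{ij}\}$ if $\widehat K_{ij}<0$; $\widehat\Sigma_{ij}-S_{ij}\in[L_{ij},U_{ij}]$ if $\widehat K_{ij}=0$; $\widehat\Sigma_{ij}-S_{ij}\in\{U_{ij}\}$ if $\widehat K_{ij}>0$.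
   Context: $\|K\|_{LU}=\sum_{i\neq j}\max\{L_{ij}K_{ij},U_{ij}K_{ij}\}$ with the convention $\pm\infty\cdot0=0$. *)

(* Defs.v *)
From HB Require Import structures.
From mathcomp Require Import all_boot all_order all_algebra.
From mathcomp Require Import all_classical all_reals all_analysis.
Set Implicit Arguments. Unset Strict Implicit. Unset Printing Implicit Defensive.
Import Order.TTheory GRing.Theory Num.Theory.
Local Open Scope ring_scope.

Definition symmetric_mx {T : Type} (d : nat) (A : 'M[T]_d) : Prop := A^T = A.

Definition psd_mx {R : realType} (d : nat) (A : 'M[R]_d) : Prop :=
  symmetric_mx A /\ forall v : 'rV[R]_d, 0 <= (v *m A *m v^T) 0 0.

Definition pd_mx {R : realType} (d : nat) (A : 'M[R]_d) : Prop :=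
  symmetric_mx A /\ forall v : 'rV[R]_d, v != 0 -> 0 < (v *m A *m v^T) 0 0.

(* ||K||_LU = sum_{i<>j} max(L_ij K_ij, U_ij K_ij); in \bar R the product
   (+-oo) * 0 is 0, matching the paper's convention. *)
Definition normLU {R : realType} (d : nat) (L U : 'M[\bar R]_d) (K : 'M[R]_d)
  : \bar R :=
  (\sum_(i < d) \sum_(j < d | i != j)
     Order.max (L i j * (K i j)%:E) (U i j * (K i j)%:E))%E.

Definition objLU {R : realType} (d : nat) (S : 'M[R]_d) (L U : 'M[\bar R]_d)
  (K : 'M[R]_d) : \bar R :=
  ((- ln (\det K) + \tr (S *m K))%:E + normLU L U K)%E.

Definition is_optimum {R : realType} (d : nat) (S : 'M[R]_d) (L U : 'M[\bar R]_d)
  (K : 'M[R]_d) : Prop :=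
  pd_mx K /\ forall K' : 'M[R]_d, pd_mx K' -> (objLU S L U K <= objLU S L U K')%E.

Definition kkt_LU {R : realType} (d : nat) (S : 'M[R]_d) (L U : 'M[\bar R]_d)
  (K : 'M[R]_d) : Prop :=
  forall i j : 'I_d,
    (K i j < 0 -> ((invmx K) i j - S i j)%:E = L i j) /\
    (K i j = 0 -> (L i j <= ((invmx K) i j - S i j)%:E)%E /\
                  (((invmx K) i j - S i j)%:E <= U i j)%E) /\
    (0 < K i j -> ((invmx K) i j - S i j)%:E = U i j).

(* Main.v *)
Require Import Defs.
From HB Require Import structures.
From mathcomp Require Import all_boot all_order all_algebra.
From mathcomp Require Import all_classical all_reals all_analysis.
From mathcomp Require Import ring lra.
Import Order.TTheory GRing.Theory Num.Theory.
Local Open Scope ring_scope.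
Set Implicit Arguments. Unset Strict Implicit. Unset Printing Implicit Defensive.

Section PD.
Variable R : realType.

Lemma pd_congr n (M E : 'M[R]_n) : pd_mx M -> E \in unitmx -> pd_mx (E *m M *m E^T).
Proof.
move=> [sM pM] uE; split.
  by rewrite /symmetric_mx !trmx_mul trmxK sM mulmxA.
move=> v v0.
have -> : v *m (E *m M *m E^T) *m v^T = (v *m E) *m M *m (v *m E)^T.
  by rewrite trmx_mul !mulmxA.
apply: pM; apply: contra v0 => /eqP h.
by rewrite -(mulmxK uE v) h mul0mx.
Qed.

Lemma qf_delta n (M : 'M[R]_n) i :
  ((delta_mx 0 i : 'rV[R]_n) *m M *m (delta_mx 0 i : 'rV[R]_n)^T) 0 0 = M i i.
Proof. by rewrite trmx_delta -rowE -colE !mxE. Qed.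

Lemma pd_diag n (M : 'M[R]_n) i : pd_mx M -> 0 < M i i.
Proof.
move=> [_ pM]; rewrite -qf_delta; apply: pM.
apply/eqP => /matrixP /(_ 0 i); rewrite !mxE !eqxx /= => /eqP.
by rewrite oner_eq0.
Qed.

Lemma pd_block_dr n (A : 'M[R]_1) (D : 'M[R]_n) :
  pd_mx (block_mx A 0 0 D) -> pd_mx D.
Proof.
move=> [sM pM]; split.
  move: sM; rewrite /symmetric_mx tr_block_mx => /eq_block_mx [_ _ _ ->] //.
move=> y y0.
have := pM (row_mx 0 y).
rewrite tr_row_mx mul_row_block mul_row_col !mul0mx !mulmx0 !add0r trmx0 mul0mx add0r.
apply; apply: contra y0 => /eqP h.
by rewrite -row_mx0 in h; case: (eq_row_mx h) => _ ->.
Qed.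


Lemma schur_step n (M : 'M[R]_(1 + n)) : pd_mx M ->
  exists a b C, [/\ 0 < a, M = block_mx a%:M b b^T C &
     exists E, [/\ \det E = 1,
        E *m M *m E^T = block_mx a%:M 0 0 (C - a^-1 *: (b^T *m b)) &
        pd_mx (C - a^-1 *: (b^T *m b))]].
Proof.
move=> pdM; have [sM _] := pdM.
set a := M (lshift n 0) (lshift n 0).
have a0 : 0 < a by apply: pd_diag.
exists a, (ursubmx M), (drsubmx M).
have eqM : M = block_mx a%:M (ursubmx M) (ursubmx M)^T (drsubmx M).
  have h1 : ulsubmx M = a%:M.
    by rewrite [LHS]mx11_scalar !mxE.
  have h2 : dlsubmx M = (ursubmx M)^T by rewrite trmx_ursub sM.
  by rewrite -{1}[M]submxK h1 h2.
split => //.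
set b := ursubmx M; set C := drsubmx M.
pose E : 'M[R]_(1 + n) := block_mx 1%:M 0 (-(a^-1) *: b^T) 1%:M.
have dE : \det E = 1 by rewrite det_lblock !det1 mulr1.
have EM : E *m M *m E^T = block_mx a%:M 0 0 (C - a^-1 *: (b^T *m b)).
  rewrite eqM tr_block_mx !mulmx_block !trmx0 !tr_scalar_mx.
  rewrite ?mul1mx ?mul0mx ?mulmx1 ?mulmx0 ?addr0 ?add0r.
  rewrite -/b -/C.
  have ha : a * - a^-1 = -1 by rewrite mulrN divff // gt_eqF.
  rewrite mul_mx_scalar mul_scalar_mx linearZ /= trmxK !scalerA ha !scaleN1r.
  rewrite (addNr b) (addNr b^T) mul0mx add0r -scalemxAl scaleNr addrC.
  by [].
exists E; split => //.
apply: (@pd_block_dr _ a%:M); rewrite -EM; apply: pd_congr => //.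
by rewrite unitmxE dE unitr1.
Qed.

Lemma pd_cong n (M : 'M[R]_n) : pd_mx M ->
  exists2 P, P \in unitmx & P *m M *m P^T = 1%:M.
Proof.
elim: n M => [|n IH] M pdM.
  by exists 1%:M; [rewrite unitmx1 | apply/matrixP => -[]].
move: M pdM; change n.+1 with (1 + n)%N => M pdM.
have [a [b [C [a0 eqM [E [dE EM pdC']]]]]] := schur_step pdM.
have [P' uP' P'C] := IH _ pdC'.
set s := Num.sqrt a.
have s0 : 0 < s by rewrite sqrtr_gt0.
pose F : 'M[R]_(1 + n) := block_mx (s^-1)%:M 0 0 P'.
exists (F *m E).
  rewrite unitmx_mul; apply/andP; split; last by rewrite unitmxE dE unitr1.
  rewrite /F unitmxE det_ublock det_scalar1.
  by rewrite unitrM -unitmxE uP' andbT unitfE invr_eq0 gt_eqF.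
have -> : F *m E *m M *m (F *m E)^T = F *m (E *m M *m E^T) *m F^T.
  by rewrite trmx_mul !mulmxA.
rewrite EM tr_block_mx !mulmx_block !trmx0 !tr_scalar_mx.
rewrite ?mul1mx ?mul0mx ?mulmx1 ?mulmx0 ?addr0 ?add0r P'C.
rewrite -!scalar_mxM.
have -> : s^-1 * a * s^-1 = 1.
  have : s ^+ 2 = a by rewrite sqr_sqrtr // ltW.
  move=> <-; rewrite expr2; field; by rewrite gt_eqF.
by rewrite [RHS]scalar_mx_block !mul0mx.
Qed.

Lemma det_pos n (M : 'M[R]_n) : pd_mx M -> 0 < \det M.
Proof.
move=> pdM; have [P uP e] := pd_cong pdM.
have := congr1 determinant e; rewrite !det_mulmx det_tr det1 => h.
rewrite ltNge; apply/negP => hle.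
have : \det P * \det M * \det P <= 0.
  by rewrite mulrAC -expr2 mulrC; apply: mulr_le0_ge0 => //; exact: sqr_ge0.
by rewrite h ler10.
Qed.

Lemma pd_unit n (M : 'M[R]_n) : pd_mx M -> M \in unitmx.
Proof. by move=> /det_pos h; rewrite unitmxE unitfE gt_eqF. Qed.


Lemma ln_le_sub1 (x : R) : 0 < x -> ln x <= x - 1.
Proof.
move=> x0; have := @le_ln1Dx R (x - 1).
have -> : 1 + (x - 1) = x by ring.
by apply; lra.
Qed.

Lemma ln_eq_sub1 (x : R) : 0 < x -> ln x = x - 1 -> x = 1.
Proof.
move=> x0 h; apply/eqP; rewrite -subr_eq0; apply/negP => hne.
have := @expR_gt1Dx R (x - 1) (introN idP hne).
have -> : 1 + (x - 1) = x by ring.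
by rewrite -h lnK ?posrE // ltxx.
Qed.

Lemma sum_sq_row n (b : 'rV[R]_n) : (b *m b^T) 0 0 = \sum_k b 0 k ^+ 2.
Proof. by rewrite mxE; apply: eq_bigr => k _; rewrite mxE expr2. Qed.

Lemma had n (M : 'M[R]_n) : pd_mx M ->
  ln (\det M) <= \tr M - n%:R /\ (ln (\det M) = \tr M - n%:R -> M = 1%:M).
Proof.
elim: n M => [|n IH] M pdM.
  rewrite det_mx00 ln1 /mxtrace big_ord0 subrr; split => // _.
  by apply/matrixP => -[].
move: M pdM; change n.+1 with (1 + n)%N => M pdM.
have [a [b [C [a0 eqM [E [dE EM pdC']]]]]] := schur_step pdM.
set C' := C - a^-1 *: (b^T *m b) in EM pdC'.
have [IH1 IH2] := IH _ pdC'.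
have dM : \det M = a * \det C'.
  have := congr1 determinant EM.
  by rewrite !det_mulmx det_tr dE mul1r mulr1 det_ublock det_scalar1.
have tM : \tr M = a + \tr C by rewrite eqM mxtrace_block mxtrace_scalar mulr1n.
set beta := (b *m b^T) 0 0.
have tC' : \tr C' = \tr C - a^-1 * beta.
  rewrite /C' raddfB /= mxtraceZ mxtrace_mulC.
  by rewrite [b *m b^T]mx11_scalar mxtrace_scalar mulr1n.
have beta0 : 0 <= beta.
  by rewrite /beta sum_sq_row; apply: sumr_ge0 => k _; exact: sqr_ge0.
have dC' : 0 < \det C' := det_pos pdC'.
have la := ln_le_sub1 a0.
have lM : ln (\det M) = ln a + ln (\det C') by rewrite dM lnM // posrE.
have ab0 : 0 <= a^-1 * beta by rewrite mulr_ge0 // invr_ge0 ltW.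
have nS : (n.+1)%:R = 1 + n%:R :> R by rewrite -natr1 addrC.
split.
  by rewrite lM tM nS; lra.
rewrite lM tM nS => heq.
have e1 : ln a = a - 1 by lra.
have e2 : a^-1 * beta = 0 by lra.
have e3 : ln (\det C') = \tr C' - n%:R by lra.
have a1 : a = 1 := ln_eq_sub1 a0 e1.
have b0 : b = 0.
  move: e2; rewrite a1 invr1 mul1r /beta sum_sq_row => /eqP.
  rewrite psumr_eq0 => [/allP hb|k _]; last exact: sqr_ge0.
  apply/matrixP => i k; rewrite ord1 mxE.
  by have := hb k (mem_index_enum _); rewrite implyTb sqrf_eq0 => /eqP.
have C1 : C = 1%:M.
  have := IH2 e3; rewrite /C' b0 trmx0 mul0mx scaler0 subr0 => ->.
  by [].
by rewrite eqM a1 b0 C1 trmx0 [RHS]scalar_mx_block.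
Qed.

Lemma main_ineq n (K K' : 'M[R]_n) : pd_mx K -> pd_mx K' ->
  ln (\det K') - ln (\det K) <= \tr (invmx K *m K') - n%:R /\
  (ln (\det K') - ln (\det K) = \tr (invmx K *m K') - n%:R -> K' = K).
Proof.
move=> pdK pdK'.
have [P uP PK] := pd_cong pdK.
pose M := P *m K' *m P^T.
have pdM : pd_mx M := pd_congr pdK' uP.
have dK := det_pos pdK; have dK' := det_pos pdK'.
have dPK : \det P * \det K * \det P = 1.
  by have := congr1 determinant PK; rewrite !det_mulmx det_tr det1.
have dM : \det M = \det K' / \det K.
  rewrite /M !det_mulmx det_tr.
  have hk : \det K != 0 by rewrite gt_eqF.
  apply: (mulIf hk); rewrite mulfVK //.
  by rewrite -[RHS]mulr1 -dPK; ring.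
have lM : ln (\det M) = ln (\det K') - ln (\det K) by rewrite dM ln_div // posrE.
have iK : invmx K = P^T *m P.
  have h : P^T *m P *m K = 1%:M.
    by rewrite -mulmxA; apply: mulmx1C; exact: PK.
  rewrite -[invmx K]mul1mx -h -!mulmxA mulmxV ?mulmx1 //; exact: pd_unit.
have tM : \tr (invmx K *m K') = \tr M.
  by rewrite iK -mulmxA mxtrace_mulC.
have [H1 H2] := had pdM.
rewrite -lM tM; split => // heq.
have M1 := H2 heq.
have canc X : invmx P *m (P *m X *m P^T) *m invmx (P^T) = X.
  by rewrite mulmxA mulmxK ?unitmx_tr // mulKmx.
by rewrite -(canc K') -(canc K) -/M M1 PK.
Qed.


Lemma e00D (A B : 'M[R]_1) : (A + B) 0 0 = A 0 0 + B 0 0. Proof. by rewrite mxE. Qed.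
Lemma e00B (A B : 'M[R]_1) : (A - B) 0 0 = A 0 0 - B 0 0. Proof. by rewrite !mxE. Qed.
Lemma e00Z a (A : 'M[R]_1) : (a *: A) 0 0 = a * A 0 0. Proof. by rewrite mxE. Qed.

Lemma inv_sym n (K : 'M[R]_n) : symmetric_mx K -> symmetric_mx (invmx K).
Proof. by rewrite /symmetric_mx trmx_inv => ->. Qed.

Lemma pd_inv n (K : 'M[R]_n) : pd_mx K -> pd_mx (invmx K).
Proof.
move=> pdK; have uK := pd_unit pdK.
have sS := inv_sym pdK.1.
have := pd_congr pdK (_ : invmx K \in unitmx).
rewrite mulVmx // mul1mx sS; apply; by rewrite unitmx_inv.
Qed.

Lemma cs_bound n (K : 'M[R]_n) (v : 'rV[R]_n) i : pd_mx K ->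
  v 0 i ^+ 2 <= (v *m K *m v^T) 0 0 * (invmx K) i i.
Proof.
move=> pdK; have uK := pd_unit pdK.
set S := invmx K.
have sS : S^T = S := inv_sym pdK.1.
have SK : S *m K = 1%:M by rewrite mulVmx.
have KS : K *m S = 1%:M by rewrite mulmxV.
set e : 'rV[R]_n := delta_mx 0 i.
have sig0 : 0 < S i i := pd_diag i (pd_inv pdK).
set q := (v *m K *m v^T) 0 0.
have key s : 0 <= q - 2 * s * v 0 i + s ^+ 2 * S i i.
  pose w := v - s *: (e *m S).
  have h0 : 0 <= (w *m K *m w^T) 0 0.
    case: (eqVneq w 0) => [->|wn0]; first by rewrite !mul0mx mxE.
    exact: ltW (pdK.2 w wn0).
  have wK : w *m K = v *m K - s *: e.
    by rewrite /w mulmxBl -scalemxAl -mulmxA SK mulmx1.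
  have wT : w^T = v^T - s *: (S *m e^T).
    by rewrite /w linearB /= linearZ /= trmx_mul sS.
  have ve : (v *m e^T) 0 0 = v 0 i by rewrite trmx_delta -colE !mxE.
  have ev : (e *m v^T) 0 0 = v 0 i by rewrite -rowE !mxE.
  have ese : (e *m S *m e^T) 0 0 = S i i by rewrite qf_delta.
  move: h0; rewrite wK wT mulmxBl !mulmxBr -!scalemxAl -!scalemxAr.
  rewrite !mulmxA -(mulmxA v K S) KS mulmx1.
  rewrite !e00B !e00Z ve ev ese -/q.
  by move=> h; rewrite expr2; lra.
have := key (v 0 i / S i i).
move=> h.
have hs : 0 <= q * S i i - v 0 i ^+ 2.
  have := mulr_ge0 h (ltW sig0).
  suff -> : (q - 2 * (v 0 i / S i i) * v 0 i + (v 0 i / S i i) ^+ 2 * S i i) * S i i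
    = q * S i i - v 0 i ^+ 2 by [].
  by field; rewrite gt_eqF.
lra.
Qed.


Lemma qf_delta2 n (v : 'rV[R]_n) i j : (v *m delta_mx i j *m v^T) 0 0 = v 0 i * v 0 j.
Proof.
rewrite -(@mul_delta_mx _ n 1 n 0 i j) mulmxA -mulmxA -colE -rowE.
by rewrite !mxE big_ord1 !mxE.
Qed.

Lemma pd_pert_off n (K : 'M[R]_n) i j t : pd_mx K -> i != j ->
  `|t| * ((invmx K) i i + (invmx K) j j) < 1 ->
  pd_mx (K + t *: (delta_mx i j + delta_mx j i)).
Proof.
move=> pdK ij ht; split.
  rewrite /symmetric_mx linearD /= linearZ /= linearD /= !trmx_delta pdK.1.
  by rewrite [delta_mx j i + _]addrC.
move=> v v0.
rewrite mulmxDr mulmxDl -scalemxAr -scalemxAl mulmxDr mulmxDl e00D e00Z e00D.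
rewrite !qf_delta2.
have hq := pdK.2 v v0.
have hi := cs_bound v i pdK; have hj := cs_bound v j pdK.
set q := (v *m K *m v^T) 0 0 in hq hi hj *.
set si := (invmx K) i i in hi ht *; set sj := (invmx K) j j in hj ht *.
set x := v 0 i in hi *; set y := v 0 j in hj *.
have h1 : 0 <= (x + y) ^+ 2 := sqr_ge0 _.
have h2 : 0 <= (x - y) ^+ 2 := sqr_ge0 _.
have hxy : 2 * `|x * y| <= q * (si + sj).
  case: (lerP 0 (x * y)) => hs; [rewrite ger0_norm // | rewrite ltr0_norm //];
  rewrite !expr2 in h1 h2 hi hj; nra.
have hm : `|t| * (2 * `|x * y|) < q.
  have := ler_wpM2l (normr_ge0 t) hxy; nra.
case: (lerP 0 t) => ht0.
  rewrite ger0_norm // in hm.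
  have : - (2 * `|x * y|) <= 2 * (x * y).
    by case: (lerP 0 (x * y)) => hs; [rewrite ger0_norm //|rewrite ltr0_norm //]; nra.
  nra.
rewrite ltr0_norm // in hm.
have : 2 * (x * y) <= 2 * `|x * y| by rewrite ler_wpM2l // ler_norm.
nra.
Qed.

Lemma pd_pert_diag n (K : 'M[R]_n) i t : pd_mx K ->
  `|t| * (invmx K) i i < 1 -> pd_mx (K + t *: delta_mx i i).
Proof.
move=> pdK ht; split.
  by rewrite /symmetric_mx linearD /= linearZ /= !trmx_delta pdK.1.
move=> v v0.
rewrite mulmxDr mulmxDl -scalemxAr -scalemxAl e00D e00Z qf_delta2.
have hq := pdK.2 v v0.
have hi := cs_bound v i pdK.
set q := (v *m K *m v^T) 0 0 in hq hi *.
set si := (invmx K) i i in hi ht *.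
set x := v 0 i in hi *.
rewrite expr2 in hi.
case: (lerP 0 t) => ht0.
  have : 0 <= t * (x * x) by rewrite mulr_ge0 // -expr2 sqr_ge0.
  lra.
rewrite ltr0_norm // in ht.
have h0 : 0 <= x * x by rewrite -expr2 sqr_ge0.
nra.
Qed.


Lemma lift_neqE n (r : 'I_n) (k : 'I_n.-1) : (lift r k == r) = false.
Proof. by apply/negbTE; rewrite eq_sym neq_lift. Qed.

Definition repl n (A : 'M[R]_n) r (w : 'rV[R]_n) : 'M[R]_n :=
  \matrix_(k, l) if k == r then w 0 l else A k l.

Lemma det_repl_add n (A : 'M[R]_n) r (w : 'rV[R]_n) t :
  \det (A + t *: (delta_mx r 0 *m w)) = \det A + t * \det (repl A r w).
Proof.
rewrite -[\det A]mul1r; apply: (@determinant_multilinear _ _ _ _ _ r).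
- by apply/rowP => l; rewrite !mxE big_ord1 !mxE !eqxx /= !mul1r.
- apply/matrixP => k l; rewrite !mxE big_ord1 !mxE.
  by rewrite lift_neqE /= mul0r mulr0 addr0.
- by apply/matrixP => k l; rewrite !mxE big_ord1 !mxE lift_neqE /= mul0r mulr0 addr0.
Qed.

Lemma det_repl_delta n (A : 'M[R]_n) r c :
  \det (repl A r (delta_mx 0 c)) = cofactor A r c.
Proof.
rewrite (expand_det_row _ r) (bigD1 c) //= big1 => [|l lc].
  rewrite !mxE !eqxx /= mul1r addr0 /cofactor; congr (_ * \det _).
  by apply/matrixP => k l; rewrite !mxE lift_neqE.
by rewrite !mxE eqxx (negbTE lc) /= mul0r.
Qed.

Lemma cof_inv n (K : 'M[R]_n) i j : K \in unitmx ->
  cofactor K i j = \det K * (invmx K) j i.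
Proof.
move=> uK; rewrite /invmx uK !mxE mulrA divff ?mul1r //.
by rewrite -unitfE -unitmxE.
Qed.

Lemma det_pert_diag n (K : 'M[R]_n) i t :
  \det (K + t *: delta_mx i i) = \det K + t * cofactor K i i.
Proof.
by rewrite -(@mul_delta_mx _ n 1 n 0 i i) det_repl_add det_repl_delta.
Qed.

Lemma det_pert_off n (K : 'M[R]_n) i j : i != j -> exists z, forall t,
  \det (K + t *: (delta_mx i j + delta_mx j i)) =
  \det K + t * (cofactor K i j + cofactor K j i) + t ^+ 2 * z.
Proof.
move=> ij.
exists (\det (repl (repl K j (delta_mx 0 i)) i (delta_mx 0 j))) => t.
rewrite scalerDr addrA -(@mul_delta_mx _ n 1 n 0 j i) det_repl_add.
rewrite -(@mul_delta_mx _ n 1 n 0 i j) det_repl_add det_repl_delta.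
have -> : repl (K + t *: ((delta_mx i 0 : 'cV[R]_n) *m delta_mx 0 j)) j (delta_mx 0 i)
   = repl K j (delta_mx 0 i) + t *: ((delta_mx i 0 : 'cV[R]_n) *m delta_mx 0 j).
  apply/matrixP => k l; rewrite !mxE big_ord1 !mxE.
  case: (eqVneq k j) => [->|kj] /=; last by [].
  by rewrite [j == i]eq_sym (negbTE ij) /= mul0r mulr0 addr0.
rewrite det_repl_add det_repl_delta.
by rewrite !mulrDr mulrA -expr2 !addrA.
Qed.


Lemma lim_le (x A B e : R) : 0 < e ->
  (forall t, 0 < t < e -> x <= t * (A + t * B)) -> x <= 0.
Proof.
move=> e0 h; rewrite leNgt; apply/negP => x0.
set c := `|A| + `|B| + 1.
have c0 : 0 < c by rewrite /c; have := normr_ge0 A; have := normr_ge0 B; lra.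
set t := Order.min (e / 2) (Order.min 1 (x / (2 * c))).
have t0 : 0 < t by rewrite !lt_min !divr_gt0 ?mulr_gt0 //; lra.
have te : t <= e / 2 by rewrite ge_min lexx.
have t1 : t <= 1 by rewrite ge_min ge_min lexx orbT.
have tx : t <= x / (2 * c) by rewrite ge_min ge_min lexx !orbT.
have tc : t * c <= x / 2.
  have := ler_wpM2r (ltW c0) tx.
  have -> : x / (2 * c) * c = x / 2 by field; rewrite gt_eqF.
  by [].
have := h t; rewrite t0 /= => /(_ (_ : t < e)) h1.
have hA : A <= `|A| := ler_norm A.
have hB : B <= `|B| := ler_norm B.
have hB0 : 0 <= `|B| := normr_ge0 B.
have hA0 : 0 <= `|A| := normr_ge0 A.
have h2 : t * (A + t * B) <= t * c.
  have s1 : t * A <= t * `|A| by rewrite ler_wpM2l // ltW.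
  have s2 : t * B <= t * `|B| by rewrite ler_wpM2l // ltW.
  have s3 : t * `|B| <= `|B| by have := ler_wpM2r hB0 t1; rewrite mul1r.
  have s4 : t * (t * B) <= t * (t * `|B|) by rewrite ler_wpM2l // ltW.
  have s5 : t * (t * `|B|) <= t * `|B| by rewrite ler_wpM2l // ltW.
  rewrite /c mulrDr mulrDr mulrDr mulr1; lra.
have : x <= x / 2 by apply: le_trans (h1 _) _ => //; [lra | lra].
lra.
Qed.

Lemma deriv_cond (a b c e : R) : 0 < e ->
  (forall t, 0 < t < e -> 0 < 1 + a * t + c * t ^+ 2 /\
     ln (1 + a * t + c * t ^+ 2) <= b * t) -> a <= b.
Proof.
move=> e0 h.
suff : a - b <= 0 by lra.
apply: (@lim_le _ (a * b - c) (b * c) e e0) => t /andP [t0 te].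
have [y0 hy] := h t (introT andP (conj t0 te)).
set y := 1 + a * t + c * t ^+ 2 in y0 hy *.
have h1 : 1 - y^-1 <= b * t.
  have := @ln_le_sub1 y^-1 (_ : 0 < y^-1); rewrite ?invr_gt0 //.
  rewrite lnV ?posrE //; lra.
have h2 : y - 1 <= b * t * y.
  have := ler_wpM2r (ltW y0) h1.
  by rewrite mulrBl mulVf ?gt_eqF // mul1r.
rewrite /y expr2 in h2.
have h3 : t * (a - b) <= t * (t * (a * b - c + t * (b * c))) by nra.
by rewrite ler_pM2l in h3.
Qed.

Lemma deriv_cond_neg (a b c e : R) : 0 < e ->
  (forall t, - e < t < 0 -> 0 < 1 + a * t + c * t ^+ 2 /\
     ln (1 + a * t + c * t ^+ 2) <= b * t) -> b <= a.
Proof.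
move=> e0 h.
suff : - a <= - b by lra.
apply: (@deriv_cond _ _ c e e0) => t /andP [t0 te].
have := h (- t); rewrite sqrrN.
have -> : a * - t = - a * t by rewrite mulrN mulNr.
have -> : b * - t = - b * t by rewrite mulrN mulNr.
apply; apply/andP; split; lra.
Qed.


Definition termLU (Lv Uv : \bar R) (x : R) : \bar R :=
  Order.max (Lv * x%:E)%E (Uv * x%:E)%E.

Lemma term_ge0 Lv Uv x : (Lv <= 0)%E -> (0 <= Uv)%E -> (0 <= termLU Lv Uv x)%E.
Proof.
move=> hL hU; rewrite /termLU le_max; case: (lerP 0 x) => hx.
  by apply/orP; right; apply: mule_ge0 => //; rewrite lee_fin.
by apply/orP; left; apply: mule_le0 => //; rewrite lee_fin ltW.
Qed.

Lemma term_pos Lv u x : (Lv <= 0)%E -> 0 <= u -> 0 <= x ->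
  termLU Lv u%:E x = (x * u)%:E.
Proof.
move=> hL hu hx; rewrite /termLU max_r; first by rewrite -EFinM mulrC.
apply: (@le_trans _ _ 0%E); first by apply: mule_le0_ge0; rewrite // lee_fin.
by apply: mule_ge0; rewrite lee_fin.
Qed.

Lemma term_neg l Uv x : l <= 0 -> (0 <= Uv)%E -> x <= 0 ->
  termLU l%:E Uv x = (x * l)%:E.
Proof.
move=> hl hU hx; rewrite /termLU max_l; first by rewrite -EFinM mulrC.
apply: (@le_trans _ _ 0%E); first by apply: mule_ge0_le0; rewrite // lee_fin.
by apply: mule_le0; rewrite lee_fin.
Qed.

Lemma term_zero Lv Uv : termLU Lv Uv 0 = 0%E.
Proof. by rewrite /termLU !mule0 maxxx. Qed.

Lemma term_pinf Lv x : 0 < x -> termLU Lv +oo x = +oo%E.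
Proof. by move=> hx; rewrite /termLU mulyr gtr0_sg // mul1e max_r // leey. Qed.

Lemma term_ninf Uv x : x < 0 -> termLU -oo Uv x = +oo%E.
Proof.
move=> hx; rewrite /termLU mulNyr ltr0_sg // EFinN mulN1e /=.
by apply: max_l; rewrite leey.
Qed.

Lemma term_lb Lv Uv g x : (Lv <= g%:E)%E -> (g%:E <= Uv)%E ->
  ((x * g)%:E <= termLU Lv Uv x)%E.
Proof.
move=> hL hU; rewrite /termLU le_max; case: (lerP 0 x) => hx.
  by apply/orP; right; rewrite EFinM muleC; apply: lee_wpmul2r; rewrite ?lee_fin.
apply/orP; left.
case: Lv hL => [l| |] //=.
  by rewrite lee_fin -EFinM lee_fin => hl; nra.
by move=> _; rewrite mulNyr ltr0_sg // EFinN mulN1e /= leey.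
Qed.


Definition restLU d (L U : 'M[\bar R]_d) (K : 'M[R]_d) (i j : 'I_d) : \bar R :=
  (\sum_(p : 'I_d * 'I_d | (p.1 != p.2) && (p != (i, j)) && (p != (j, i)))
     termLU (L p.1 p.2) (U p.1 p.2) (K p.1 p.2))%E.

Lemma normLU_split d (L U : 'M[\bar R]_d) K (i j : 'I_d) : i != j ->
  normLU L U K = (termLU (L i j) (U i j) (K i j) +
                  (termLU (L j i) (U j i) (K j i) + restLU L U K i j))%E.
Proof.
move=> ij; rewrite /normLU pair_big_dep /=.
rewrite (bigD1 (i, j)) /= ?ij //; congr (_ + _)%E.
rewrite (bigD1 (j, i)) /=; last by rewrite eq_sym ij /= xpair_eqE negb_and eq_sym ij.
by [].
Qed.

Lemma restLU_ge0 d (L U : 'M[\bar R]_d) K (i j : 'I_d) :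
  (forall k l : 'I_d, k != l -> (L k l <= 0)%E /\ (0 <= U k l)%E) ->
  (0 <= restLU L U K i j)%E.
Proof.
move=> h; apply: sume_ge0 => -[k l] /andP [/andP [kl _] _].
by have [h1 h2] := h k l kl; apply: term_ge0.
Qed.

Lemma normLU_ge0 d (L U : 'M[\bar R]_d) K :
  (forall k l : 'I_d, k != l -> (L k l <= 0)%E /\ (0 <= U k l)%E) ->
  (0 <= normLU L U K)%E.
Proof.
move=> h; apply: sume_ge0 => k _; apply: sume_ge0 => l kl.
by have [h1 h2] := h k l kl; apply: term_ge0.
Qed.

Lemma tr_delta n (A : 'M[R]_n) i j : \tr (A *m delta_mx i j) = A j i.
Proof.
rewrite -(@mul_delta_mx _ n 1 n 0 i j) mulmxA -colE mxtrace_mulC -rowE.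
by rewrite /mxtrace big_ord1 !mxE.
Qed.

Lemma sumoff_tr d (X G : 'M[R]_d) : X^T = X -> (forall i, G i i = 0) ->
  \sum_i \sum_(j | i != j) X i j * G i j = \tr (G *m X).
Proof.
move=> sX G0; rewrite /mxtrace; apply: eq_bigr => i _.
rewrite mxE [in RHS](bigD1 i) //= G0 mul0r add0r; apply: eq_big => [j|j _]; first by rewrite eq_sym.
by rewrite mulrC -(congr1 (fun M : 'M[R]_d => M i j) sX) mxE.
Qed.


Lemma sym_entry T n (A : 'M[T]_n) i j : symmetric_mx A -> A j i = A i j.
Proof. by move=> sA; rewrite -{2}sA mxE. Qed.

Lemma pd1 d : pd_mx (1%:M : 'M[R]_d).
Proof.
split; first by rewrite /symmetric_mx trmx1.
move=> v v0; rewrite mulmx1 sum_sq_row lt_def sumr_ge0 ?andbT; last first.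
  by move=> k _; exact: sqr_ge0.
apply: contra v0 => /eqP /psumr_eq0P h.
apply/eqP/matrixP => a k; rewrite ord1 mxE.
by have := h (fun k _ => sqr_ge0 _) k isT; rewrite expr2 => /eqP; rewrite mulf_eq0 orbb => /eqP.
Qed.

Lemma normLU_fin d (S : 'M[R]_d) (L U : 'M[\bar R]_d) (K : 'M[R]_d) :
  (forall k l : 'I_d, k != l -> (L k l <= 0)%E /\ (0 <= U k l)%E) ->
  is_optimum S L U K -> normLU L U K \is a fin_num.
Proof.
move=> hLU [pdK opt].
have h1 : normLU L U (1%:M : 'M[R]_d) = 0%E.
  apply: big1 => k _; apply: big1 => l kl.
  by rewrite mxE (negbTE kl) /= !mule0 maxxx.
have := opt _ (pd1 d); rewrite /objLU h1 adde0 => hK.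
rewrite ge0_fin_numE ?normLU_ge0 // ltey; apply/negP => /eqP h.
by move: hK; rewrite h addey // leye_eq.
Qed.


Lemma diag_cond d (S : 'M[R]_d) (L U : 'M[\bar R]_d) (K : 'M[R]_d) i :
  (forall k l : 'I_d, k != l -> (L k l <= 0)%E /\ (0 <= U k l)%E) ->
  is_optimum S L U K -> (invmx K) i i = S i i.
Proof.
move=> hLU opt; have fin := normLU_fin hLU opt; case: opt => pdK optK.
have uK := pd_unit pdK.
set D := \det K; have D0 : 0 < D := det_pos pdK.
set sg := (invmx K) i i; have sg0 : 0 < sg := pd_diag i (pd_inv pdK).
set N := fine (normLU L U K); have eN : normLU L U K = N%:E by rewrite fineK.
have key t : `|t| * sg < 1 -> 0 < 1 + sg * t + 0 * t ^+ 2 /\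
    ln (1 + sg * t + 0 * t ^+ 2) <= S i i * t.
  move=> ht; rewrite mul0r addr0.
  have pdt := pd_pert_diag pdK ht.
  have dt : \det (K + t *: delta_mx i i) = D * (1 + sg * t).
    by rewrite det_pert_diag (cof_inv _ _ uK) -/D -/sg; ring.
  have y0 : 0 < 1 + sg * t by have := det_pos pdt; rewrite dt pmulr_rgt0.
  have nt : normLU L U (K + t *: delta_mx i i) = normLU L U K.
    apply: eq_bigr => k _; apply: eq_bigr => l kl.
    rewrite !mxE; have -> : (k == i) && (l == i) = false.
      by apply/negbTE; apply: contra kl => /andP [/eqP -> /eqP ->].
    by rewrite /= ?mulr0n ?mulr0 ?addr0.
  have tt : \tr (S *m (K + t *: delta_mx i i)) = \tr (S *m K) + t * S i i.
    by rewrite mulmxDr mxtraceD -scalemxAr mxtraceZ tr_delta.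
  have := optK _ pdt; rewrite /objLU nt eN tt dt -!EFinD lee_fin.
  rewrite lnM ?posrE // => h; split => //; lra.
have up : sg <= S i i.
  apply: (@deriv_cond sg (S i i) 0 sg^-1); first by rewrite invr_gt0.
  move=> t /andP [t0 te]; apply: key; rewrite gtr0_norm //.
  by rewrite -(mulVf (lt0r_neq0 sg0)) ltr_pM2r.
have low : S i i <= sg.
  apply: (@deriv_cond_neg sg (S i i) 0 sg^-1); first by rewrite invr_gt0.
  move=> t /andP [te t0]; apply: key; rewrite ltr0_norm //.
  by rewrite -(mulVf (lt0r_neq0 sg0)) ltr_pM2r // ltrNl.
by apply/eqP; rewrite eq_le up low.
Qed.


Lemma off_point d (S : 'M[R]_d) (L U : 'M[\bar R]_d) (K : 'M[R]_d) i j beta :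
  symmetric_mx S -> symmetric_mx L -> symmetric_mx U ->
  (forall k l : 'I_d, k != l -> (L k l <= 0)%E /\ (0 <= U k l)%E) ->
  is_optimum S L U K -> i != j ->
  termLU (L i j) (U i j) (K i j) = (K i j * beta)%:E ->
  exists z, forall t, `|t| * ((invmx K) i i + (invmx K) j j) < 1 ->
    termLU (L i j) (U i j) (K i j + t) = ((K i j + t) * beta)%:E ->
    0 < 1 + (2 * (invmx K) i j) * t + z * t ^+ 2 /\
    ln (1 + (2 * (invmx K) i j) * t + z * t ^+ 2) <= (2 * (S i j + beta)) * t.
Proof.
move=> sS sL sU hLU opt ij hT0.
have fin := normLU_fin hLU opt; case: opt => pdK optK.
have uK := pd_unit pdK.
set D := \det K; have D0 : 0 < D := det_pos pdK.
have [z0 hz] := det_pert_off K ij.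
exists (z0 / D) => t ht hTt.
pose H : 'M[R]_d := delta_mx i j + delta_mx j i.
have pdt : pd_mx (K + t *: H) := pd_pert_off pdK ij ht.
set sg := (invmx K) i j.
have sSig : symmetric_mx (invmx K) := inv_sym pdK.1.
have dt : \det (K + t *: H) = D * (1 + (2 * sg) * t + (z0 / D) * t ^+ 2).
  rewrite /H hz (cof_inv _ _ uK) (cof_inv _ _ uK) -/D (@sym_entry _ _ _ i j sSig) -/sg.
  by field; rewrite gt_eqF.
have y0 : 0 < 1 + (2 * sg) * t + (z0 / D) * t ^+ 2.
  by have := det_pos pdt; rewrite dt pmulr_rgt0.
have tt : \tr (S *m (K + t *: H)) = \tr (S *m K) + 2 * S i j * t.
  rewrite mulmxDr mxtraceD -scalemxAr mxtraceZ /H mulmxDr mxtraceD !tr_delta.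
  by rewrite (@sym_entry _ _ _ i j sS); ring.
have eKt : (K + t *: H) i j = K i j + t.
  by rewrite !mxE !eqxx (negbTE ij) /= addr0 mulr1.
have sKt : symmetric_mx (K + t *: H) := pdt.1.
have rest_eq : restLU L U (K + t *: H) i j = restLU L U K i j.
  apply: eq_bigr => -[k l] /andP [/andP [_ h1] h2] /=.
  rewrite !mxE; move: h1 h2; rewrite !xpair_eqE => h1 h2.
  rewrite (negbTE h1) (negbTE h2) /=.
  by rewrite addr0 mulr0 addr0.
have nK := normLU_split L U K ij.
have nKt := normLU_split L U (K + t *: H) ij.
rewrite (@sym_entry _ _ _ i j sKt) (@sym_entry _ _ _ i j sL) (@sym_entry _ _ _ i j sU) eKt hTt rest_eq in nKt.
rewrite (@sym_entry _ _ _ i j pdK.1) (@sym_entry _ _ _ i j sL) (@sym_entry _ _ _ i j sU) hT0 in nK.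
have finr : restLU L U K i j \is a fin_num.
  by move: fin; rewrite nK !fin_numD => /andP [_ /andP [_ ->]].
set rho := fine (restLU L U K i j).
have er : restLU L U K i j = rho%:E by rewrite fineK.
have := optK _ pdt; rewrite /objLU nK nKt er tt dt -!EFinD lee_fin.
rewrite lnM ?posrE // => h; split => //; lra.
Qed.


Lemma off_side d (S : 'M[R]_d) (L U : 'M[\bar R]_d) (K : 'M[R]_d) i j beta e1
  (up : bool) :
  symmetric_mx S -> symmetric_mx L -> symmetric_mx U ->
  (forall k l : 'I_d, k != l -> (L k l <= 0)%E /\ (0 <= U k l)%E) ->
  is_optimum S L U K -> i != j -> 0 < e1 ->
  termLU (L i j) (U i j) (K i j) = (K i j * beta)%:E ->
  (forall t, (if up then 0 < t < e1 else - e1 < t < 0) ->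
     termLU (L i j) (U i j) (K i j + t) = ((K i j + t) * beta)%:E) ->
  if up then (invmx K) i j - S i j <= beta else beta <= (invmx K) i j - S i j.
Proof.
move=> sS sL sU hLU opt ij e10 hT0 hT.
have [z hz] := off_point sS sL sU hLU opt ij hT0.
have pdK := opt.1.
set m := (invmx K) i i + (invmx K) j j.
have m0 : 0 < m by rewrite addr_gt0 //; apply: pd_diag; apply: pd_inv.
set e := Order.min e1 m^-1.
have e0 : 0 < e by rewrite lt_min e10 invr_gt0.
have ee1 : e <= e1 by rewrite ge_min lexx.
have em : e <= m^-1 by rewrite ge_min lexx orbT.
have tm t : `|t| < e -> `|t| * m < 1.
  move=> ht; rewrite -(mulVf (lt0r_neq0 m0)) ltr_pM2r //.
  exact: lt_le_trans ht em.
case: up hT => hT.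
  suff : 2 * (invmx K) i j <= 2 * (S i j + beta) by lra.
  apply: (@deriv_cond _ _ z e e0) => t /andP [t0 te].
  apply: hz; first by apply: tm; rewrite gtr0_norm.
  apply: hT; rewrite t0 /=; exact: lt_le_trans te ee1.
suff : 2 * (S i j + beta) <= 2 * (invmx K) i j by lra.
apply: (@deriv_cond_neg _ _ z e e0) => t /andP [te t0].
apply: hz; first by apply: tm; rewrite ltr0_norm // ltrNl.
apply: hT; rewrite t0 andbT; apply: le_lt_trans te; by rewrite lerN2.
Qed.


Lemma kkt_nec d (S : 'M[R]_d) (L U : 'M[\bar R]_d) (K : 'M[R]_d) :
  symmetric_mx S -> symmetric_mx L -> symmetric_mx U ->
  (forall k l : 'I_d, k != l -> (L k l <= 0)%E /\ (0 <= U k l)%E) ->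
  (forall i : 'I_d, L i i = 0%E /\ U i i = 0%E) ->
  is_optimum S L U K -> kkt_LU S L U K.
Proof.
move=> sS sL sU hLU hD opt i j.
case: (eqVneq i j) => [<-|ij].
  have e := diag_cond i hLU opt; have [Li Ui] := hD i.
  by rewrite e subrr Li Ui; split => //; split.
have fin := normLU_fin hLU opt.
have [Lij Uij] := hLU i j ij.
have nK := normLU_split L U K ij.
have termfin : termLU (L i j) (U i j) (K i j) \is a fin_num.
  by move: fin; rewrite nK fin_numD => /andP [].
have side := @off_side d S L U K i j.
case: (ltgtP (K i j) 0) => hk.
-
  case hL : (L i j) Lij termfin => [l| |] // Lij' termfin.
    have l0 : l <= 0 by rewrite -lee_fin.
    have hT0 : termLU (L i j) (U i j) (K i j) = (K i j * l)%:E.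
      by rewrite hL term_neg // ltW.
    have hT t : t < - K i j ->
        termLU (L i j) (U i j) (K i j + t) = ((K i j + t) * l)%:E.
      by move=> t2; rewrite hL term_neg //; lra.
    have hkp : 0 < - K i j by rewrite oppr_gt0.
    have a1 := side l (- K i j) true sS sL sU hLU opt ij hkp hT0
      (fun t ht => hT t (let: conj _ h := andP ht in h)).
    have a2 := side l (- K i j) false sS sL sU hLU opt ij hkp hT0
      (fun t ht => hT t (lt_trans (let: conj _ h := andP ht in h) hkp)).
    simpl in a1, a2.
    have e : invmx K i j - S i j = l by apply/eqP; rewrite eq_le a1 a2.
    rewrite e; split => //; split => // h.
    by move: hk; rewrite h ltxx.
  by move: termfin; rewrite term_ninf.
- case hU : (U i j) Uij termfin => [u| |] // Uij' termfin.
    have u0 : 0 <= u by rewrite -lee_fin.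
    have hT0 : termLU (L i j) (U i j) (K i j) = (K i j * u)%:E.
      by rewrite hU term_pos // ltW.
    have hT t : - K i j < t ->
        termLU (L i j) (U i j) (K i j + t) = ((K i j + t) * u)%:E.
      by move=> t1; rewrite hU term_pos //; lra.
    have hkn : - K i j < 0 by rewrite oppr_lt0.
    have a1 := side u (K i j) true sS sL sU hLU opt ij hk hT0
      (fun t ht => hT t (lt_trans hkn (let: conj h _ := andP ht in h))).
    have a2 := side u (K i j) false sS sL sU hLU opt ij hk hT0
      (fun t ht => hT t (let: conj h _ := andP ht in h)).
    simpl in a1, a2.
    have e : invmx K i j - S i j = u by apply/eqP; rewrite eq_le a1 a2.
    rewrite e; split => //; split => // h.
    by move: hk; rewrite h ltxx.
  by move: termfin; rewrite term_pinf.
- have hT0 beta : termLU (L i j) (U i j) (K i j) = (K i j * beta)%:E.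
    by rewrite hk term_zero mul0r.
  have up : ((invmx K i j - S i j)%:E <= U i j)%E.
    case hU : (U i j) Uij => [u| |] // Uij'; last by rewrite leey.
    have u0 : 0 <= u by rewrite -lee_fin.
    have := side u 1 true sS sL sU hLU opt ij ltr01 (hT0 u).
    rewrite lee_fin; apply => t /andP [t0 _].
    by rewrite hk add0r hU term_pos // ltW.
  have low : (L i j <= (invmx K i j - S i j)%:E)%E.
    case hL : (L i j) Lij => [l| |] // Lij'; last by rewrite leNye.
    have l0 : l <= 0 by rewrite -lee_fin.
    have := side l 1 false sS sL sU hLU opt ij ltr01 (hT0 l).
    rewrite lee_fin; apply => t /andP [_ t0].
    by rewrite hk add0r hL term_neg // ltW.
  by split => //; split.
Qed.


Lemma kkt_uniq d (S : 'M[R]_d) (L U : 'M[\bar R]_d) (Kh K : 'M[R]_d) :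
  (forall k l : 'I_d, k != l -> (L k l <= 0)%E /\ (0 <= U k l)%E) ->
  (forall i : 'I_d, L i i = 0%E /\ U i i = 0%E) ->
  is_optimum S L U Kh -> pd_mx K -> kkt_LU S L U K -> K = Kh.
Proof.
move=> hLU hD [pdKh optKh] pdK kK.
set G := invmx K - S.
have G0 i : G i i = 0.
  have := (kK i i).2.2 (pd_diag i pdK); rewrite (hD i).2 => /eqP.
  by rewrite eqe subr_eq0 => /eqP h; rewrite /G !mxE h subrr.
have hb i j : i != j -> [/\ (L i j <= (G i j)%:E)%E, ((G i j)%:E <= U i j)%E &
    termLU (L i j) (U i j) (K i j) = (K i j * G i j)%:E].
  move=> ij; have [h1 [h2 h3]] := kK i j; have [Lij Uij] := hLU i j ij.
  have gE : G i j = invmx K i j - S i j by rewrite !mxE.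
  rewrite gE.
  case: (ltgtP (K i j) 0) => hk.
  - have e := h1 hk.
    have g0 : invmx K i j - S i j <= 0 by rewrite -lee_fin e.
    rewrite -e; split; [by [] | by apply: (le_trans _ Uij); rewrite lee_fin |].
    by rewrite term_neg // ltW.
  - have e := h3 hk.
    have g0 : 0 <= invmx K i j - S i j by rewrite -lee_fin e.
    rewrite -e; split; [by apply: (le_trans Lij); rewrite lee_fin | by [] |].
    by rewrite term_pos // ltW.
  - have [b1 b2] := h2 hk; split => //.
    by rewrite hk term_zero mul0r.
have sK := pdK.1; have sKh := pdKh.1.
have nK : normLU L U K = (\tr (G *m K))%:E.
  rewrite -(sumoff_tr sK G0) /normLU -sumEFin; apply: eq_bigr => i _.
  rewrite -sumEFin; apply: eq_bigr => j ij.
  by have [_ _ h] := hb i j ij; exact: h.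
have nKh : ((\tr (G *m Kh))%:E <= normLU L U Kh)%E.
  rewrite -(sumoff_tr sKh G0) /normLU -sumEFin; apply: lee_sum => i _.
  rewrite -sumEFin; apply: lee_sum => j ij.
  have [b1 b2 _] := hb i j ij; exact: term_lb.
have trG X : \tr (S *m X) + \tr (G *m X) = \tr (invmx K *m X).
  by rewrite -mxtraceD -mulmxDl /G addrC subrK.
have := optKh _ pdK; rewrite /objLU nK -EFinD.
move=> /(le_trans (leeD2l _ nKh)); rewrite -!EFinD lee_fin.
rewrite -!addrA !trG mulVmx ?pd_unit // mxtrace1 => h.
have [H1 H2] := main_ineq pdK pdKh.
by apply/esym/H2; lra.
Qed.

End PD.

Unset Implicit Arguments.
Set Strict Implicit.

Theorem proposition8p2 (R : realType) (d : nat) (S : 'M[R]_d)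
  (L U : 'M[\bar R]_d) :
  psd_mx S -> symmetric_mx L -> symmetric_mx U ->
  (forall i j : 'I_d, i != j -> (L i j <= 0)%E /\ (0 <= U i j)%E) ->
  (forall i : 'I_d, L i i = 0%E /\ U i i = 0%E) ->
  forall Khat : 'M[R]_d, is_optimum S L U Khat ->
    kkt_LU S L U Khat /\
    (forall K : 'M[R]_d, pd_mx K -> kkt_LU S L U K -> K = Khat).
Proof.
move=> [sS _] sL sU hLU hD Kh opt; split.
  exact: kkt_nec.
by move=> K pdK kK; apply: kkt_uniq hLU hD opt pdK kK.
Qed.
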